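(* Fix a real $\varepsilon\in(0,1/2]$. Let $\mathcal C\subseteq F^n$ be a (not necessarily linear) code with rate $R=(\log_q|\mathcal C|)/n\in[\varepsilon,1-\varepsilon]$, let $L\in\mathbb Z^+$ satisfy $$L<\frac{1}{\sqrt{2n}}\,2^{\eta_q(\varepsilon)\,n},$$ and let $\tau\in\mathbb Z_{\ge0}$ satisfy $\tau\ge \frac{L n(1-R)}{L+1}$. If $\mathcal C$ is $(\tau,L)$-list decodable, then $L<q-1$.
   Context: $F=\mathrm{GF}(q)$. For $L\in\mathbb Z^+$ and $\tau\in\mathbb Z_{\ge0}$, a code $\mathcal C\subseteq F^n$ is $(\tau,L)$-list decodable if for every $y\in F^n$ at most $L$ codewords of $\mathcal C$ lie at Hamming distance at most $\tau$ from $y$. With $\mathsf h(x)=-x\log_2x-(1-x)\log_2(1-x)$ the binary entropy function, define for $\varepsilon\in[0,1/2]$: $\eta_q(\varepsilon)=\mathsf h\!\left(\frac{q-1}{q}(1-\varepsilon)\right)-(1-\varepsilon)\,\mathsf h(1/q)$. *)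

(* Defs.v *)
From mathcomp Require Import all_boot all_algebra.
From Stdlib Require Import Reals.
Open Scope R_scope.

Set Implicit Arguments.
Unset Strict Implicit.
Unset Printing Implicit Defensive.

Definition hamming (F : finFieldType) (n : nat) (x y : 'rV[F]_n) : nat :=
  #|[set i : 'I_n | x ord0 i != y ord0 i]|.

Definition list_decodable (F : finFieldType) (n : nat)
    (C : {set 'rV[F]_n}) (tau L : nat) : Prop :=
  forall y : 'rV[F]_n, (#|[set c in C | (hamming c y <= tau)%nat]| <= L)%nat.

Definition log2 (x : R) : R := Rdiv (ln x) (ln 2).

Definition h2 (x : R) : R :=
  Rminus (Ropp (Rmult x (log2 x))) (Rmult (Rminus 1 x) (log2 (Rminus 1 x))).

Definition eta_q (q : nat) (eps : R) : R :=
  Rminus (h2 (Rmult (Rdiv (INR q - 1) (INR q)) (Rminus 1 eps)))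
         (Rmult (Rminus 1 eps) (h2 (Rinv (INR q)))).

Definition rate (F : finFieldType) (n : nat) (C : {set 'rV[F]_n}) : R :=
  Rdiv (Rdiv (ln (INR #|C|)) (ln (INR #|F|))) (INR n).

(* Main.v *)
Require Import Defs.
From mathcomp Require Import all_boot all_algebra zify.
From Stdlib Require Import Reals Lra Psatz.
From Coquelicot Require Import Coquelicot.
Open Scope R_scope.

Lemma INR_subn (n k : nat) : (k <= n)%nat -> INR (n - k)%nat = INR n - INR k.
Proof. move=> h; rewrite -minusE minus_INR //; apply/leP. exact h. Qed.

Lemma INR_muln (n k : nat) : INR (n * k)%nat = INR n * INR k.
Proof. by rewrite -multE mult_INR. Qed.

Lemma INR_addn (n k : nat) : INR (n + k)%nat = INR n + INR k.
Proof. by rewrite -plusE plus_INR. Qed.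

Lemma INR_pos (n : nat) : (0 < n)%nat -> 0 < INR n.
Proof. move=> h; apply lt_0_INR; apply/ltP; exact h. Qed.

Lemma INR_lenat (n k : nat) : (n <= k)%nat -> INR n <= INR k.
Proof. move=> h; apply le_INR; apply/leP; exact h. Qed.

Lemma ln_le' x y : 0 < x -> x <= y -> ln x <= ln y.
Proof.
move=> hx hy; case: (Rle_lt_or_eq_dec _ _ hy) => h.
- by apply Rlt_le, ln_increasing.
- by rewrite h; apply Rle_refl.
Qed.

Lemma ln_nonpos x : x <= 0 -> ln x = 0.
Proof. move=> h; rewrite /ln; destruct (Rlt_dec 0 x) as [h1|h1]; [exfalso; lra | reflexivity]. Qed.

Lemma ln_le_sub1 x : 0 < x -> ln x <= x - 1.
Proof.
move=> hx; have := exp_ineq1_le (ln x); rewrite exp_ln //; lra.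
Qed.

Lemma ln_div' x y : 0 < x -> 0 < y -> ln (x / y) = ln x - ln y.
Proof.
move=> hx hy; rewrite /Rdiv ln_mult //; last by apply Rinv_0_lt_compat.
by rewrite ln_Rinv.
Qed.

Lemma ln_0 : ln 0 = 0.
Proof. by apply ln_nonpos; lra. Qed.

Lemma mvt_nonneg (f df : R -> R) (a b : R) :
  a <= b ->
  (forall x, a <= x <= b -> is_derive f x (df x)) ->
  (forall x, a <= x <= b -> 0 <= df x) -> f a <= f b.
Proof.
intros hab hd hpos.
have e1 : Rmin a b = a by apply Rmin_left; lra.
have e2 : Rmax a b = b by apply Rmax_right; lra.
destruct (MVT_gen f a b df) as [c [hc he]].
- intros x hx. rewrite e1 e2 in hx. apply hd; lra.
- intros x hx. rewrite e1 e2 in hx.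
  apply continuity_pt_filterlim.
  apply (ex_derive_continuous (K:=R_AbsRing) (V:=R_NormedModule) f x).
  exists (df x). apply hd; lra.
- rewrite e1 e2 in hc.
  assert (0 <= df c * (b - a)) by (apply Rmult_le_pos; [apply hpos; lra|lra]). lra.
Qed.

Lemma atanh_lower y : 0 <= y < 1 -> 2*y + 2/3*y^3 <= ln(1+y) - ln(1-y).
Proof.
intros hy.
set f := fun t => ln(1+t) - ln(1-t) - (2*t + 2/3*t^3).
assert (f 0 <= f y).
{ apply (mvt_nonneg f (fun t => 2*t^4/(1-t^2))); [lra| |].
  - intros x hx. unfold f. auto_derive. repeat split; lra. field; repeat split; nra.
  - intros z hz. apply Rdiv_le_0_compat. nra. nra. }
unfold f in H. rewrite Rplus_0_r Rminus_0_r ln_1 in H. lra.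
Qed.

Lemma atanh_upper y : 0 <= y < 1 -> ln(1+y) - ln(1-y) <= 2*y + 2/3*y^3/(1-y^2).
Proof.
intros hy.
set f := fun t => 2*t + 2/3*t^3/(1-t^2) - (ln(1+t) - ln(1-t)).
assert (f 0 <= f y).
{ apply (mvt_nonneg f (fun t => 4/3*t^4/(1-t^2)^2)); [lra| |].
  - intros x hx. unfold f. auto_derive. repeat split; nra. field; repeat split; nra.
  - intros z hz. apply Rdiv_le_0_compat; [nra|]. apply pow_lt. nra. }
unfold f in H. rewrite Rplus_0_r Rminus_0_r ln_1 in H.
replace (2*0 + 2/3*0^3/(1-0^2) - (0-0)) with 0 in H by field. lra.
Qed.

Lemma ln2_lower : 37/54 <= ln 2.
Proof.
have h := atanh_lower (1/3) ltac:(lra).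
have e : ln (1 + 1/3) - ln (1 - 1/3) = ln 2.
{ rewrite -ln_div'; try lra. f_equal. field. }
rewrite e in h. lra.
Qed.

Lemma lnstep_bounds (m : nat) : (0 < m)%nat ->
  1 <= (INR m + /2) * (ln (INR m + 1) - ln (INR m)) <=
       1 + /12 * (/ INR m - / (INR m + 1)).
Proof.
move=> hm; have hM := INR_pos _ hm.
set y := / (2 * INR m + 1).
have hy : 0 <= y < 1.
{ rewrite /y; split; first by apply Rlt_le, Rinv_0_lt_compat; lra.
  rewrite -Rinv_1; apply Rinv_lt_contravar; lra. }
have e : ln (1 + y) - ln (1 - y) = ln (INR m + 1) - ln (INR m).
{ have hy1 : 0 < 1 - y by lra.
  rewrite -ln_div'; try lra. rewrite -ln_div'; try lra.
  f_equal. rewrite /y; field. lra. }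
have h1 := atanh_lower y hy. have h2 := atanh_upper y hy.
rewrite e in h1 h2.
have ey : (INR m + /2) * (2*y) = 1 by rewrite /y; field; lra.
have ey2 : (INR m + /2) * (2/3*y^3/(1-y^2)) = /12 * (/ INR m - / (INR m + 1)).
{ rewrite /y; field; repeat split; try lra. nra. }
split.
- have : (INR m + /2) * (2*y + 2/3*y^3) <= (INR m + /2) * (ln (INR m + 1) - ln (INR m)).
  { apply Rmult_le_compat_l; lra. }
  have : 0 <= (INR m + /2) * (2/3*y^3) by apply Rmult_le_pos; [lra| destruct hy; nra].
  nra.
- have : (INR m + /2) * (ln (INR m + 1) - ln (INR m)) <= (INR m + /2) * (2*y + 2/3*y^3/(1-y^2)).
  { apply Rmult_le_compat_l; lra. }
  rewrite Rmult_plus_distr_l ey ey2. lra.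
Qed.
Definition lfact (m : nat) : R := ln (INR (m`!)).
Definition ltf (m : nat) : R := INR m * ln (INR m) - lfact m - INR m + /2 * ln (INR m).

Lemma fact_INR_pos m : 0 < INR (m`!).
Proof. apply INR_pos, fact_gt0. Qed.

Lemma lfactS m : lfact m.+1 = ln (INR m + 1) + lfact m.
Proof.
rewrite /lfact factS INR_muln ln_mult; last exact: fact_INR_pos.
- by rewrite S_INR.
- apply INR_pos; done.
Qed.

Lemma lfact0 : lfact 0 = 0.
Proof. by rewrite /lfact /= ln_1. Qed.

Lemma ltf_step m : (0 < m)%nat ->
  ltf m.+1 - ltf m = (INR m + /2) * (ln (INR m + 1) - ln (INR m)) - 1.
Proof.
move=> hm. rewrite /ltf lfactS S_INR. ring.
Qed.

Lemma ltf_mono j d : (0 < j)%nat -> ltf j <= ltf (j + d).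
Proof.
move=> hj; elim: d => [|d IH]; first by rewrite addn0; apply Rle_refl.
rewrite addnS.
have h := ltf_step (j + d) ltac:(rewrite addn_gt0 hj //).
have [h1 _] := lnstep_bounds (j + d) ltac:(rewrite addn_gt0 hj //).
lra.
Qed.

Lemma ltf1 : ltf 1 = -1.
Proof. rewrite /ltf /lfact /= Rmult_1_l !ln_1; ring. Qed.

Lemma ltf2 : ltf 2 = 3/2 * ln 2 - 2.
Proof.
rewrite /ltf /lfact /=.
replace (1+1) with 2 by ring. replace (INR (2 * 1)) with 2; last by simpl; ring.
lra.
Qed.

Lemma ltf_up n : (0 < n)%nat -> ltf n <= -1 + /12 - /12 * / INR n.
Proof.
elim: n => [//|n IH] _.
case: (posnP n) => [->|hn].
- rewrite ltf1 /=. rewrite Rinv_1. lra.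
- have h := ltf_step n hn. have [_ h2] := lnstep_bounds n hn.
  have := IH hn. rewrite S_INR. lra.
Qed.

Definition Tb (n k : nat) : R :=
  ln (INR 'C(n, k)) + INR k * ln (INR k) + INR (n - k)%nat * ln (INR (n - k)%nat)
  - INR n * ln (INR n).

Lemma lfact_ltf m : lfact m = INR m * ln (INR m) - INR m + /2 * ln (INR m) - ltf m.
Proof. rewrite /ltf; ring. Qed.

Lemma ltf_ge2 m : (2 <= m)%nat -> ltf 2 <= ltf m.
Proof. move=> h; have := ltf_mono 2 (m - 2) isT; rewrite subnKC //. Qed.

Lemma Tb_sym n k : (k <= n)%nat -> Tb n (n - k) = Tb n k.
Proof.
move=> h; rewrite /Tb bin_sub // subKn //. ring.
Qed.

Lemma ln_binom n k : (k <= n)%nat ->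
  ln (INR 'C(n, k)) = lfact n - lfact k - lfact (n - k).
Proof.
move=> h; rewrite /lfact -(bin_fact h) !INR_muln.
have hc : 0 < INR 'C(n, k) by apply INR_pos; rewrite bin_gt0.
rewrite !ln_mult //; try apply fact_INR_pos; try (apply Rmult_lt_0_compat; apply fact_INR_pos).
ring.
Qed.

Lemma Tb_ge n k : (0 < n)%nat -> (k <= n)%nat -> - /2 * ln (2 * INR n) <= Tb n k.
Proof.
move=> hn hk.
have hN := INR_pos _ hn.
have l2 := ln2_lower.
have ln2n : ln (2 * INR n) = ln 2 + ln (INR n) by rewrite ln_mult //; lra.
have lnn0 : 0 <= ln (INR n).
{ rewrite -ln_1; apply ln_le'; [lra|]. apply (INR_lenat 1); done. }
have T0 : - /2 * ln (2 * INR n) <= Tb n 0.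
{ rewrite /Tb bin0 subn0 /= ln_1. rewrite ln2n. lra. }
have T1 : (2 <= n)%nat -> - /2 * ln (2 * INR n) <= Tb n 1.
{ move=> h2.
  rewrite /Tb bin1 /= Rmult_1_l ln_1 INR_subn; last by apply: leq_trans h2.
  simpl INR.
  have hn1 : 1 <= INR n - 1.
  { have := INR_lenat _ _ h2. simpl. lra. }
  case: (leqP 4 n) => h4.
  - have h4' : 4 <= INR n by have := INR_lenat _ _ h4; simpl; lra.
    have e : ln (INR n) - ln (INR n - 1) <= / (INR n - 1).
    { rewrite -ln_div'; try lra. have := ln_le_sub1 (INR n / (INR n - 1)).
      have -> : INR n / (INR n - 1) - 1 = / (INR n - 1) by field; lra.
      apply. apply Rdiv_lt_0_compat; lra. }
    have e2 : (INR n - 1) * (ln (INR n) - ln (INR n - 1)) <= 1.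
    { have := Rmult_le_compat_l (INR n - 1) _ _ ltac:(lra) e.
      rewrite Rinv_r; lra. }
    have e3 : 2 <= ln (2 * INR n).
    { have : ln 8 <= ln (2 * INR n) by apply ln_le'; lra.
      have -> : ln 8 = 3 * ln 2.
      { have -> : 8 = 2 ^ 3 by ring. rewrite ln_pow; [simpl; ring|lra]. }
      lra. }
    nra.
  - have : n = 2%nat \/ n = 3%nat by lia.
    case=> -> /=.
    + replace (1+1-1) with 1 by ring. rewrite ln_1.
      have -> : ln (2 * (1+1)) = 2 * ln 2.
      { replace (2 * (1+1)) with (2*2) by ring. rewrite ln_mult; lra. }
      replace (1+1) with 2 by ring. lra.
    + replace (1+1+1-1) with 2 by ring. replace (1+1+1) with 3 by ring.
      have -> : ln (2 * 3) = ln 2 + ln 3 by rewrite ln_mult; lra.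
      have : ln 27 <= ln 32 by apply ln_le'; lra.
      have -> : 27 = 3 ^ 3 by ring. have -> : 32 = 2 ^ 5 by ring.
      rewrite !ln_pow; try lra. simpl. lra. }
have TG : forall k, (2 <= k)%nat -> (2 <= n - k)%nat -> - /2 * ln (2 * INR n) <= Tb n k.
{ move=> j hj hnj.
  have hjn : (j <= n)%nat by lia.
  have hjN : 2 <= INR j by have := INR_lenat _ _ hj; simpl; lra.
  have em : INR (n - j)%nat = INR n - INR j by apply INR_subn.
  have hnjN : 2 <= INR (n - j)%nat by have := INR_lenat _ _ hnj; simpl; lra.
  rewrite /Tb (ln_binom _ _ hjn) !lfact_ltf.
  have a1 := ltf_ge2 _ hj. have a2 := ltf_ge2 _ hnj.
  have a3 := ltf_up n hn.
  have a4 : 0 < / INR n by apply Rinv_0_lt_compat.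
  have a5 : ln (INR j) + ln (INR (n - j)%nat) <= 2 * ln (INR n) - 2 * ln 2.
  { rewrite -ln_mult; try lra.
    have : ln (INR j * INR (n - j)%nat) <= ln (INR n * INR n / (2 * 2)).
    { apply ln_le'. nra. rewrite em.
      have h0 : 0 <= (INR n - 2 * INR j)^2 by apply pow2_ge_0.
      apply (Rmult_le_reg_r 4); [lra|].
      replace (INR n * INR n / (2*2) * 4) with (INR n * INR n) by field. nra. }
    rewrite ln_div'; try nra. rewrite !ln_mult; lra. }
  rewrite ltf2 in a1 a2. rewrite ln2n. lra. }
case: (posnP k) => [->|hk0]; first exact T0.
case: (eqVneq k n) => [->|hkn].
  by rewrite -(Tb_sym n n (leqnn n)) subnn.
case: (eqVneq k 1%nat) => [->|hk1].
  apply: T1; lia.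
case: (eqVneq k (n-1)%nat) => [hkn1|hkn1].
  rewrite -(Tb_sym n k hk) hkn1 subKn; last lia. apply: T1; lia.
apply: TG; lia.
Qed.

Definition Hn (x : R) : R := - x * ln x - (1 - x) * ln (1 - x).

Lemma xlnle x p : 0 <= x -> 0 < p -> x * (ln p - ln x) <= p - x.
Proof.
move=> hx hp; case: (Rle_lt_or_eq_dec _ _ hx) => h.
- rewrite -ln_div' //. have := ln_le_sub1 (p / x) ltac:(apply Rdiv_lt_0_compat; lra).
  move=> h1. have := Rmult_le_compat_l x _ _ hx h1.
  have -> : x * (p / x - 1) = p - x by field; lra. done.
- rewrite -h; lra.
Qed.

Lemma gibbs x p : 0 <= x <= 1 -> 0 < p < 1 ->
  Hn x <= - x * ln p - (1 - x) * ln (1 - p).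
Proof.
move=> hx hp. rewrite /Hn.
have h1 := xlnle x p ltac:(lra) ltac:(lra).
have h2 := xlnle (1 - x) (1 - p) ltac:(lra) ltac:(lra).
lra.
Qed.

Lemma Hn_ge0 x : 0 <= x <= 1 -> 0 <= Hn x.
Proof.
move=> hx. rewrite /Hn.
have l1 : x * ln x <= 0.
{ case: (Rle_lt_or_eq_dec 0 x ltac:(lra)) => h.
  - have : ln x <= ln 1 by apply ln_le'; lra. rewrite ln_1. nra.
  - rewrite -h; lra. }
have l2 : (1 - x) * ln (1 - x) <= 0.
{ case: (Rle_lt_or_eq_dec 0 (1 - x) ltac:(lra)) => h.
  - have : ln (1 - x) <= ln 1 by apply ln_le'; lra. rewrite ln_1. nra.
  - rewrite -h; lra. }
lra.
Qed.

Lemma Hn_concave l u v : 0 <= l <= 1 -> 0 <= u <= 1 -> 0 <= v <= 1 ->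
  0 < l * u + (1 - l) * v < 1 ->
  l * Hn u + (1 - l) * Hn v <= Hn (l * u + (1 - l) * v).
Proof.
move=> hl hu hv hm.
set m := l * u + (1 - l) * v.
have g1 := gibbs u m hu hm. have g2 := gibbs v m hv hm.
have e : Hn m = l * (- u * ln m - (1 - u) * ln (1 - m))
               + (1 - l) * (- v * ln m - (1 - v) * ln (1 - m)).
{ rewrite /Hn /m; ring. }
rewrite e.
have := Rmult_le_compat_l l _ _ ltac:(lra) g1.
have := Rmult_le_compat_l (1 - l) _ _ ltac:(lra) g2.
lra.
Qed.

Lemma ln4 A B C D : 0 < A -> 0 < B -> 0 < C -> 0 < D ->
  ln A - ln B + ln C - ln D = ln (A * C / (B * D)).
Proof.
move=> *; rewrite ln_div'; try nra. rewrite !ln_mult; try lra.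
Qed.

Section Delta.
Variable a : R.
Hypothesis ha : 0 < a < 1.

Definition Dl (e : R) := Hn (a * e) - Hn (a * (1 - e)) + (1 - 2 * e) * Hn a.
Definition dDl (e : R) := a * (ln (1 - a * e) - ln (a * e))
   + a * (ln (1 - a * (1 - e)) - ln (a * (1 - e))) - 2 * Hn a.

Lemma Dl_deriv e : 0 < e < 1 -> is_derive Dl e (dDl e).
Proof.
move=> he. rewrite /Dl /dDl /Hn /Rminus.
have h1 : 0 < a * e by nra.
have h2 : 0 < a * (1 - e) by nra.
auto_derive.
- repeat split; nra.
- field; repeat split; nra.
Qed.

Lemma dDl_mono e1 e2 : 0 < e1 -> e1 <= e2 -> e2 <= /2 -> dDl e2 <= dDl e1.
Proof.
move=> h1 h12 h2. rewrite /dDl.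
have eq : forall e, 0 < e <= /2 ->
  ln (1 - a * e) - ln (a * e) + (ln (1 - a * (1 - e)) - ln (a * (1 - e)))
  = ln ((1 - a) / (a * a * (e * (1 - e))) + 1).
{ move=> e he. have -> : forall x y z w : R, x - y + (z - w) = x - y + z - w by move=> *; ring.
  rewrite ln4; try nra. f_equal. field. split; nra. }
have Hx : forall e, 0 < e <= /2 -> a * (ln (1 - a * e) - ln (a * e))
   + a * (ln (1 - a * (1 - e)) - ln (a * (1 - e))) =
   a * ln ((1 - a) / (a * a * (e * (1 - e))) + 1).
{ move=> e he; rewrite -eq //; ring. }
rewrite (Hx e1) ?(Hx e2); try lra.
have : ln ((1 - a) / (a * a * (e2 * (1 - e2))) + 1) <=
       ln ((1 - a) / (a * a * (e1 * (1 - e1))) + 1).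
{ apply ln_le'.
  - have : 0 < (1 - a) / (a * a * (e2 * (1 - e2))).
    { apply Rdiv_lt_0_compat; [lra|]. apply Rmult_lt_0_compat; nra. }
    lra.
  - apply Rplus_le_compat_r. apply Rmult_le_compat_l; [lra|].
    apply Rinv_le_contravar. apply Rmult_lt_0_compat; nra.
    have : e1 * (1 - e1) <= e2 * (1 - e2) by nra. move=> hh. apply Rmult_le_compat_l; nra. }
move=> hh. apply Rplus_le_compat_r. apply Rmult_le_compat_l; lra.
Qed.

Lemma Dl_half : Dl (/2) = 0.
Proof. rewrite /Dl. replace (1 - /2) with (/2) by field. field. Qed.

Lemma Dl_ge0 e : 0 < e <= /2 -> 0 <= Dl e.
Proof.
move=> he.
case: (Rle_or_lt (dDl e) 0) => hd.
-
  have := mvt_nonneg (fun t => - Dl t) (fun t => - dDl t) e (/2) ltac:(lra).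
  move=> H. have : - Dl e <= - Dl (/2).
  { apply H.
    - move=> x hx. apply: is_derive_opp. apply Dl_deriv. lra.
    - move=> x hx. have := dDl_mono e x ltac:(lra) ltac:(lra) ltac:(lra). lra. }
  rewrite Dl_half. lra.
- (* increasing part: Dl t <= Dl e for t in (0,e], and Dl t >= - t * C *)
  set C := 2 * Hn a + a * Rabs (ln (1 - a) - ln a).
  have hC : 0 <= C.
  { have := Hn_ge0 a ltac:(lra). have := Rabs_pos (ln (1 - a) - ln a). rewrite /C. nra. }
  have key : forall t, 0 < t <= e -> - t * C <= Dl e.
  { move=> t ht.
    have m : Dl t <= Dl e.
    { apply (mvt_nonneg Dl dDl t e); try lra.
      - move=> x hx. apply Dl_deriv. lra.
      - move=> x hx. have := dDl_mono x e ltac:(lra) ltac:(lra) ltac:(lra). lra. }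
    have g := gibbs (a * (1 - t)) a ltac:(split; nra) ha.
    have h0 := Hn_ge0 (a * t) ltac:(split; nra).
    have ab := Rle_abs (- (ln (1 - a) - ln a)). rewrite Rabs_Ropp in ab.
    have : - t * C <= Dl t.
    { rewrite /Dl /C. rewrite /Hn in g h0 *.
      have ht' : 0 <= a * t by nra.
      have := Rmult_le_compat_l (a * t) _ _ ht' ab.
      nra. }
    lra. }
  case: (Rle_or_lt 0 (Dl e)) => // hneg.
  set t := Rmin e (- Dl e / (2 * (C + 1))).
  have ht : 0 < t <= e.
  { rewrite /t; split. apply Rmin_pos; [lra|]. apply Rdiv_lt_0_compat; lra.
    apply Rmin_l. }
  have := key t ht.
  have : t <= - Dl e / (2 * (C + 1)) by apply Rmin_r.
  move=> h1 h2.
  have : t * C <= - Dl e / (2 * (C + 1)) * C by apply Rmult_le_compat_r.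
  have : - Dl e / (2 * (C + 1)) * C < - Dl e.
  { apply (Rmult_lt_reg_r (2 * (C + 1))); [lra|].
    field_simplify; nra. }
  lra.
Qed.
End Delta.

Definition Vs (n q k : nat) : nat := \sum_(i < k.+1) 'C(n, i) * expn (q - 1) i.

Section Comb.
Variable F : finFieldType.
Variable n : nat.
Local Open Scope ring_scope.
Import GRing.Theory.

Definition supp (z : 'rV[F]_n) : {set 'I_n} := [set i | z ord0 i != 0].
Definition wt (z : 'rV[F]_n) : nat := #|supp z|.

Lemma ham_wt (c y : 'rV[F]_n) : hamming c y = wt (c - y).
Proof. rewrite /hamming /wt /supp; apply: eq_card => i; by rewrite !inE !mxE subr_eq0. Qed.

Lemma card_supp (S : {set 'I_n}) :
  #|[set z : 'rV[F]_n | supp z == S]| = expn #|F|.-1 #|S|.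
Proof.
set h := fun f : {ffun 'I_n -> F} => (\row_j f j : 'rV[F]_n).
have hinj : injective h.
{ move=> f1 f2 /rowP e; apply/ffunP => j; have := e j; by rewrite !mxE. }
have -> : [set z | supp z == S] = h @: pffun_on 0 S (predC1 0).
{ apply/setP => z; rewrite inE; apply/idP/imsetP.
  - move=> /eqP hS. exists [ffun j => z ord0 j].
    + apply/pffun_onP; split.
      * apply/subsetP => j; rewrite inE ffunE => hj; by rewrite -hS inE.
      * move=> x /imageP [j hj ->]; rewrite ffunE inE. by rewrite -hS inE in hj.
    + apply/rowP => j; by rewrite mxE ffunE.
  - case=> f /pffun_onP [hsup hR] ->. apply/eqP/setP => j; rewrite /supp inE mxE.
    apply/idP/idP.
    + move=> hj; apply: (subsetP hsup); by rewrite inE.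
    + move=> hj; have := hR (f j) (image_f _ hj). by rewrite inE. }
by rewrite (card_imset _ hinj) card_pffun_on cardC1.
Qed.

Lemma card_wt_eq i : #|[set z : 'rV[F]_n | wt z == i]| = ('C(n, i) * expn #|F|.-1 i)%nat.
Proof.
rewrite -sum1_card (partition_big supp (fun S : {set 'I_n} => #|S| == i)); last first.
  by move=> z; rewrite inE.
rewrite (eq_bigr (fun S => expn #|F|.-1 i)%nat); last first.
{ move=> S /eqP hS. rewrite -hS -(card_supp S) -[RHS]sum1_card.
  apply: eq_bigl => z; rewrite !inE /wt. apply/andP/idP => [[//]|/eqP h].
  by rewrite h hS eqxx. }
rewrite sum_nat_const.
have -> : #|[pred S : {set 'I_n} | #|S| == i]| = #|[set S : {set 'I_n} | #|S| == i]|.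
  by apply: eq_card => S; rewrite inE.
by rewrite card_draws card_ord.
Qed.

Lemma card_wt_le k : #|[set z : 'rV[F]_n | (wt z <= k)%nat]| = Vs n #|F| k.
Proof.
elim: k => [|k IH].
  rewrite /Vs big_ord1 bin0 expn0. have := card_wt_eq 0. rewrite bin0 expn0 => <-.
  by apply: eq_card => z; rewrite !inE leqn0.
rewrite /Vs big_ord_recr /= -/(Vs n #|F| k) -IH subn1 -(card_wt_eq k.+1).
have -> : [set z : 'rV[F]_n | (wt z <= k.+1)%nat] =
   [set z | (wt z <= k)%nat] :|: [set z | wt z == k.+1].
{ apply/setP => z; rewrite !inE leq_eqVlt ltnS; by rewrite orbC. }
rewrite cardsU.
have -> : [set z : 'rV[F]_n | (wt z <= k)%nat] :&: [set z | wt z == k.+1] = set0.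
{ apply/setP => z; rewrite !inE. apply/negbTE; apply/negP => /andP [h1 /eqP h2].
  by rewrite h2 ltnn in h1. }
by rewrite cards0 subn0.
Qed.

Lemma comb_main (C : {set 'rV[F]_n}) (tau L k : nat) :
  list_decodable C tau L -> (k <= tau)%nat ->
  (#|C| * Vs n #|F| k <= L * expn #|F| n)%nat.
Proof.
move=> hld hk.
have h1 : (\sum_(y : 'rV[F]_n) #|[set c in C | (hamming c y <= tau)%nat]| <= L * expn #|F| n)%nat.
{ apply: (@leq_trans (\sum_(y : 'rV[F]_n) L)).
  - by apply: leq_sum => y _; apply: hld.
  - by rewrite sum_nat_const card_mx mul1n mulnC. }
apply: leq_trans h1.
have e : forall y : 'rV[F]_n, #|[set c in C | (hamming c y <= tau)%nat]| =
   (\sum_(c in C) (if (hamming c y <= tau)%nat then 1 else 0))%nat.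
{ move=> y; rewrite -big_mkcondr /= -sum1_card.
  by apply: eq_bigl => c; rewrite inE. }
rewrite (eq_bigr _ (fun y _ => e y)) exchange_big /=.
have e2 : forall c : 'rV[F]_n,
   (\sum_(y : 'rV[F]_n) (if (hamming c y <= tau)%nat then 1 else 0))%nat = Vs n #|F| tau.
{ move=> c. rewrite -card_wt_le -sum1_card [RHS]big_mkcond /=.
  rewrite (reindex_inj (h := fun y : 'rV[F]_n => c - y)) /=; last first.
    by move=> y1 y2 /= /addrI /oppr_inj.
  apply: eq_bigr => y _. rewrite inE ham_wt. have -> : c - (c - y) = y by rewrite opprB addrC subrK. done. }
rewrite (eq_bigr _ (fun c _ => e2 c)) sum_nat_const. apply: leq_mul => //.
rewrite /Vs [X in (X <= _)%nat](big_ord_widen tau.+1 (fun i => 'C(n, i) * expn (#|F| - 1) i)%nat) //.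
rewrite big_mkcond /= leq_sum // => i _. by case: ifP.
Qed.
End Comb.

Section BadCase.
Local Open Scope nat_scope.
Fixpoint Vr (n q k : nat) : nat :=
  match k with 0 => 1 | k'.+1 => Vr n q k' + 'C(n, k'.+1) * expn (q - 1) k'.+1 end.
Lemma Vs_Vr n q k : Vs n q k = Vr n q k.
Proof.
elim: k => [|k IH]; first by rewrite /Vs big_ord1 bin0 expn0.
by rewrite /Vs big_ord_recr /= -IH.
Qed.
Lemma chk : seq.all (fun q => seq.all (fun n => seq.all (fun k =>
   if [&& (0 < n)%nat, (k < n)%nat, ((q - 1) * n < k * q)%nat & (n * expn (q - 1) 2 < 2 * expn q 2)%nat]
   then (expn q (2 * n) <= 2 * n * expn (Vr n q k) 2)%nat else true) (seq.iota 0 8)) (seq.iota 0 8)) [:: 2; 3].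
Proof. vm_compute. reflexivity. Qed.

Lemma Vs_full n q : (0 < q)%nat -> Vs n q n = expn q n.
Proof.
move=> hq; rewrite /Vs -{2}(subnK hq) addnC expnDn.
apply: eq_bigr => i _. by rewrite exp1n mul1n.
Qed.

Lemma Vs_ge_term n q k : ('C(n, k) * expn (q - 1) k <= Vs n q k)%nat.
Proof. by rewrite /Vs big_ord_recr /= leq_addl. Qed.

Lemma bad_case q n k : (1 < q)%nat -> (0 < n)%nat -> (k <= n)%nat ->
  ((q - 1) * n < k * q)%nat -> (n * expn (q - 1) 2 < 2 * expn q 2)%nat ->
  (expn q (2 * n) <= 2 * n * expn (Vs n q k) 2)%nat.
Proof.
move=> hq hn hk h1 h2.
case: (eqVneq k n) => [->|hkn].
  rewrite Vs_full; last lia. rewrite mulnC expnM -expnM mulnC expnM.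
  rewrite -[X in (X <= _)%nat]mul1n leq_mul2r; apply/orP; right; lia.
have hkn' : (k < n)%nat by rewrite ltn_neqAle hkn hk.
have hqn : (q < n)%nat by nia.
have hq3 : (q <= 3)%nat.
{ case: (leqP q 3) => // h4. exfalso.
  have : ((q + 1) * expn (q - 1) 2 <= n * expn (q - 1) 2)%nat by apply: leq_mul; lia.
  nia. }
have hn7 : (n <= 7)%nat by nia.
have hq23 : q \in [:: 2; 3] by rewrite !inE; lia.
have hc := chk.
move/allP: hc => /(_ q hq23) /allP /(_ n) hc.
have : n \in seq.iota 0 8 by rewrite mem_iota; lia.
move=> /hc /allP /(_ k) hc2.
have : k \in seq.iota 0 8 by rewrite mem_iota; lia.
move=> /hc2.
have -> : [&& (0 < n)%nat, (k < n)%nat, ((q - 1) * n < k * q)%nat & (n * expn (q - 1) 2 < 2 * expn q 2)%nat].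
{ apply/and4P; split => //; lia. }
by rewrite Vs_Vr.
Qed.

End BadCase.

Lemma INR_expn (a b : nat) : INR (expn a b) = INR a ^ b.
Proof. elim: b => [|b IH]; first by rewrite expn0. by rewrite expnS INR_muln IH. Qed.

Definition etan (a x : R) := Hn (a * (1 - x)) - (1 - x) * Hn a.
Definition phi (a x : R) := Hn x + x * (ln a - ln (1 - a)).

Lemma phi_le a x : 0 < a < 1 -> 0 <= x <= 1 -> phi a x <= - ln (1 - a).
Proof. move=> ha hx; have := gibbs x a hx ha; rewrite /phi; lra. Qed.

Lemma phi_a a : 0 < a < 1 -> phi a a = - ln (1 - a).
Proof. move=> ha; rewrite /phi /Hn; ring. Qed.

Lemma phi_mono a r x : 0 < a < 1 -> 0 < r -> r <= x -> x <= a -> phi a r <= phi a x.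
Proof.
move=> ha hr hrx hxa.
case: (Rle_lt_or_eq_dec _ _ hxa) => hxa'; last first.
  rewrite hxa' phi_a //; apply phi_le; lra.
set l := (a - x) / (a - r).
have hl : 0 <= l <= 1.
{ rewrite /l; split. apply Rdiv_le_0_compat; lra.
  apply (Rmult_le_reg_r (a - r)); [lra|]. field_simplify; lra. }
have ex : x = l * r + (1 - l) * a by rewrite /l; field; lra.
have hc := Hn_concave l r a hl ltac:(lra) ltac:(lra) ltac:(rewrite -ex; lra).
rewrite -ex in hc.
have h1 := phi_le a r ha ltac:(lra).
have e1 : phi a x = Hn x + (l * r + (1 - l) * a) * (ln a - ln (1 - a)) by rewrite /phi -ex.
rewrite e1.
have : l * phi a r + (1 - l) * phi a a <= Hn x + (l * r + (1 - l) * a) * (ln a - ln (1 - a)).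
{ rewrite /phi. nra. }
rewrite phi_a //.
have : (1 - l) * phi a r <= (1 - l) * (- ln (1 - a)) by apply Rmult_le_compat_l; lra.
nra.
Qed.

Lemma phi_eta a R : 0 < a < 1 -> phi a (a * (1 - R)) = - (1 - R) * ln (1 - a) + etan a R.
Proof. move=> ha; rewrite /phi /etan /Hn; ring. Qed.

Lemma etan_le a e : 0 < a < 1 -> 0 <= e <= 1 -> etan a e <= - e * ln (1 - a).
Proof.
move=> ha he. have := gibbs (a * (1 - e)) a ltac:(split; nra) ha.
rewrite /etan /Hn. move=> h. nra.
Qed.

Lemma etan_mono a e R : 0 < a < 1 -> 0 < e <= /2 -> e <= R <= 1 - e ->
  etan a e <= etan a R.
Proof.
move=> ha he hR.
case: (Rle_lt_or_eq_dec e (/2) ltac:(lra)) => he2; last first.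
  have -> : R = e by lra. lra.
set l := (1 - e - R) / (1 - 2 * e).
have hl : 0 <= l <= 1.
{ rewrite /l; split. apply Rdiv_le_0_compat; lra.
  apply (Rmult_le_reg_r (1 - 2 * e)); [lra|]. field_simplify; lra. }
have eR : a * (1 - R) = l * (a * (1 - e)) + (1 - l) * (a * e)
  by rewrite /l; field; lra.
have hc := Hn_concave l (a * (1 - e)) (a * e) hl ltac:(split; nra) ltac:(split; nra)
   ltac:(rewrite -eR; split; nra).
rewrite -eR in hc.
have hD := Dl_ge0 a ha e ltac:(lra).
have e1R : 1 - R = l * (1 - e) + (1 - l) * e by rewrite /l; field; lra.
have : etan a (1 - e) - etan a e = Dl a e.
{ rewrite /etan /Dl. replace (1 - (1 - e)) with e by ring. ring. }
move=> hdiff.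
have : l * etan a e + (1 - l) * etan a (1 - e) <= etan a R.
{ rewrite /etan. replace (1 - (1 - e)) with e by ring.
  have E : (1 - R) * Hn a = (l * (1 - e) + (1 - l) * e) * Hn a by rewrite e1R.
  nra. }
have : 0 <= (1 - l) * Dl a e by apply Rmult_le_pos; lra.
nra.
Qed.

Lemma h2_Hn x : h2 x * ln 2 = Hn x.
Proof.
have l2 : 0 < ln 2 by have := ln_lt_2; lra.
rewrite /h2 /log2 /Hn. field. lra.
Qed.

Lemma lnN_lower q n k : (1 < q)%nat -> (0 < k)%nat -> (k < n)%nat ->
  - /2 * ln (2 * INR n) + INR n * phi ((INR q - 1) / INR q) (INR k / INR n)
  <= ln (INR ('C(n, k) * expn (q - 1) k)%nat).
Proof.
move=> hq hk hkn.
have hn : (0 < n)%nat by lia.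
have hN := INR_pos _ hn. have hK := INR_pos _ hk.
have hNK : 0 < INR n - INR k by have := INR_lenat _ _ hkn; rewrite S_INR; lra.
have hQ : 2 <= INR q by have := INR_lenat _ _ hq; simpl; lra.
have hT := Tb_ge n k hn (ltnW hkn).
rewrite /Tb INR_subn in hT; last exact: ltnW.
have hC : 0 < INR 'C(n, k) by apply INR_pos; rewrite bin_gt0 ltnW.
rewrite INR_muln INR_expn INR_subn; last lia. change (INR 1) with 1.
have hp : 0 < (INR q - 1) ^ k by apply pow_lt; lra.
rewrite [X in _ <= X]ln_mult // ln_pow; last lra.
have ea : (INR q - 1) / INR q = 1 - / INR q - 0 by field; lra.
rewrite /phi /Hn.
have -> : 1 - (INR q - 1) / INR q = / INR q by field; lra.
rewrite ln_div'; try lra. rewrite ln_Rinv; try lra.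
rewrite ln_div'; try lra.
have -> : 1 - INR k / INR n = (INR n - INR k) / INR n by field; lra.
rewrite ln_div'; try lra.
have -> : INR n * (- (INR k / INR n) * (ln (INR k) - ln (INR n)) -
   (INR n - INR k) / INR n * (ln (INR n - INR k) - ln (INR n)) +
   INR k / INR n * (ln (INR q - 1) - ln (INR q) - - ln (INR q)))
  = - INR k * ln (INR k) - (INR n - INR k) * ln (INR n - INR k) + INR n * ln (INR n)
    + INR k * ln (INR q - 1) by field; lra.
lra.
Qed.

Lemma Vs_gt0 n q k : (0 < Vs n q k)%nat.
Proof. by rewrite /Vs big_ord_recl /= bin0 expn0 mul1n. Qed.

Lemma INR_ltnat (a b : nat) : INR a < INR b -> (a < b)%nat.
Proof. move=> h; apply/ltP; exact: INR_lt. Qed.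

Lemma INR_lenat' (a b : nat) : INR a <= INR b -> (a <= b)%nat.
Proof. move=> h; apply/leP; exact: INR_le. Qed.

Lemma Hn_sym x : Hn (1 - x) = Hn x.
Proof. rewrite /Hn. replace (1 - (1 - x)) with x by ring. ring. Qed.

Lemma ln_sqrt x : 0 < x -> ln (sqrt x) = /2 * ln x.
Proof. move=> hx; by rewrite -Rpower_sqrt // ln_Rpower. Qed.

Theorem mainTheorem2 (eps : R) (F : finFieldType) (n : nat)
    (C : {set 'rV[F]_n}) (L tau : nat) :
  (0 < eps ) -> (eps <= 1 / 2 ) ->
  (0 < n)%nat ->
  (eps <= rate C ) -> (rate C <= 1 - eps ) ->
  (0 < L)%nat ->
  (INR L < Rmult (Rinv (sqrt (2 * INR n)))
                 (Rpower 2 (Rmult (eta_q #|F| eps) (INR n))) ) ->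
  (Rdiv (INR L * INR n * (1 - rate C)) (INR L + 1) <= INR tau ) ->
  list_decodable C tau L ->
  (L < #|F| - 1)%nat.
Proof.
move=> he1 he2 hn hR1 hR2 hL hLb htau hld.
have hq : (1 < #|F|)%nat := card_finNzRing_gt1 F.
case: (leqP (#|F| - 1) L) => [hqL|//]; exfalso.
move: hLb htau hqL hq. set q := #|F|. move=> hLb htau hqL hq.
have hQ : 2 <= INR q by have := INR_lenat _ _ hq; simpl; lra.
have hQ1 : INR q - 1 <= INR L.
{ have := INR_lenat _ _ hqL. rewrite INR_subn; last lia. simpl; lra. }
set a := (INR q - 1) / INR q.
have ha : 0 < a < 1.
{ rewrite /a; split. apply Rdiv_lt_0_compat; lra.
  apply (Rmult_lt_reg_r (INR q)); [lra|]. field_simplify; lra. }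
have e1a : 1 - a = / INR q by rewrite /a; field; lra.
have lnq : ln (INR q) = - ln (1 - a) by rewrite e1a ln_Rinv; [ring|lra].
have lnq1 : ln (INR q - 1) = ln a - ln (1 - a).
{ rewrite -ln_div'; try lra. f_equal. rewrite e1a /a; field; lra. }
have lnqpos : 0 < ln (INR q) by rewrite -ln_1; apply ln_increasing; lra.
have hN : 1 <= INR n by have := INR_lenat _ _ hn; simpl; lra.
set Rr := rate C in hR1 hR2 htau *.
have hRpos : 0 < Rr by lra.
have hM : (0 < #|C|)%nat.
{ case: (posnP #|C|) => // hM0. exfalso.
  have : Rr = 0 by rewrite /Rr /rate hM0 /= ln_0 /Rdiv !Rmult_0_l.
  lra. }
have hMR : 0 < INR #|C| by apply INR_pos.
have lnM : ln (INR #|C|) = Rr * INR n * ln (INR q).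
{ rewrite /Rr /rate -/q. field. split; lra. }
have hL0 : 0 < INR L by apply INR_pos.
have hLln : ln (INR L) < - /2 * ln (2 * INR n) + INR n * etan a eps.
{ have p1 : 0 < sqrt (2 * INR n) by apply sqrt_lt_R0; lra.
  have p2 : 0 < Rpower 2 (eta_q q eps * INR n) by rewrite /Rpower; apply exp_pos.
  have := ln_increasing _ _ hL0 hLb.
  rewrite ln_mult; [|by apply Rinv_0_lt_compat|done].
  rewrite ln_Rinv // ln_sqrt; last lra. rewrite ln_Rpower.
  have -> : eta_q q eps * INR n * ln 2 = INR n * (eta_q q eps * ln 2) by ring.
  have -> : eta_q q eps * ln 2 = etan a eps.
  { rewrite /eta_q /etan Rmult_minus_distr_r h2_Hn Rmult_assoc h2_Hn.
    rewrite -/a -e1a Hn_sym. done. }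
  lra. }
set rho := a * (1 - Rr).
have hrho : 0 < rho by rewrite /rho; apply Rmult_lt_0_compat; lra.
have hrhoa : rho < a by rewrite /rho; nra.
have hrn : rho * INR n <= INR tau.
{ have hal : a <= INR L / (INR L + 1).
  { rewrite /a. apply (Rmult_le_reg_r (INR q * (INR L + 1))). nra.
    field_simplify; try lra; nra. }
  apply: Rle_trans htau.
  have -> : INR L * INR n * (1 - Rr) / (INR L + 1) = INR L / (INR L + 1) * ((1 - Rr) * INR n)
    by field; lra.
  rewrite /rho Rmult_assoc. apply Rmult_le_compat_r; [nra|done]. }
have hcombR : forall k, (k <= tau)%nat ->
   ln (INR #|C|) + ln (INR (Vs n q k)) <= ln (INR L) + INR n * ln (INR q).
{ move=> k hk. have := comb_main F n C tau L k hld hk. rewrite -/q. move/INR_lenat.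
  rewrite !INR_muln INR_expn.
  have hV : 0 < INR (Vs n q k) by apply INR_pos, Vs_gt0.
  move=> h. have := ln_le' _ _ (Rmult_lt_0_compat _ _ hMR hV) h.
  rewrite ln_mult // ln_mult //; last by apply pow_lt; lra.
  by rewrite ln_pow; last lra. }
have hem := etan_mono a eps Rr ha ltac:(lra) ltac:(lra).
have good : forall k, (k <= tau)%nat -> rho * INR n <= INR k -> INR k <= a * INR n -> False.
{ move=> k hk h1 h2.
  have hk0 : (0 < k)%nat by apply INR_ltnat; simpl; nra.
  have hkn : (k < n)%nat by apply INR_ltnat; nra.
  have hKR : 0 < INR k by apply INR_pos.
  have hV := Vs_ge_term n q k.
  have hlow := lnN_lower q n k hq hk0 hkn.
  have hVl : ln (INR ('C(n, k) * expn (q - 1) k)%nat) <= ln (INR (Vs n q k)).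
  { apply ln_le'; last exact: INR_lenat.
    apply INR_pos. rewrite muln_gt0 bin_gt0 expn_gt0 ltnW //=. lia. }
  have hkn' : rho <= INR k / INR n by apply (Rmult_le_reg_r (INR n)); [lra|]; field_simplify; lra.
  have hkn'' : INR k / INR n <= a by apply (Rmult_le_reg_r (INR n)); [lra|]; field_simplify; lra.
  have hphi := phi_mono a rho (INR k / INR n) ha hrho hkn' hkn''.
  have hpe := phi_eta a Rr ha. rewrite -/rho in hpe.
  have hc := hcombR k hk.
  have m1 := Rmult_le_compat_l (INR n) _ _ ltac:(lra) hphi.
  have m2 := Rmult_le_compat_l (INR n) _ _ ltac:(lra) hem.
  rewrite hpe in m1. rewrite lnM in hc.
  rewrite -/a in hlow. rewrite lnq in hc hLln hlow *.
  nra. }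
case: (Rle_or_lt (INR tau) (a * INR n)) => hta.
  exact: (good tau (leqnn _) hrn hta).
set k1 := ((q - 1) * n %/ q)%nat.
have hqpos : (0 < q)%nat by lia.
have hk1a : INR k1 <= a * INR n.
{ have := leq_trunc_div ((q - 1) * n) q. rewrite -/k1. move/INR_lenat.
  rewrite !INR_muln INR_subn; last lia. simpl INR. move=> h.
  rewrite /a. apply (Rmult_le_reg_r (INR q)); [lra|]. field_simplify; lra. }
have hceil := ltn_ceil ((q - 1) * n) hqpos. rewrite -/k1 in hceil.
have hk1b : a * INR n < INR k1 + 1.
{ have := INR_lenat _ _ hceil. rewrite S_INR !INR_muln S_INR INR_subn; last lia.
  simpl INR. move=> h.
  rewrite /a. apply (Rmult_lt_reg_r (INR q)); [lra|]. field_simplify; lra. }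
have hk1tau : (k1 < tau)%nat by apply INR_ltnat; lra.
case: (Rle_or_lt (rho * INR n) (INR k1)) => hk1.
  exact: (good k1 (ltnW hk1tau) hk1 hk1a).
have hk1n : (k1 < n)%nat by apply INR_ltnat; nra.
have aRn : a * Rr * INR n < 1 by rewrite /rho in hk1; nra.
have hLM : ln (INR L) < ln (INR #|C|) - /2 * ln (2 * INR n).
{ have h := etan_le a eps ha ltac:(lra).
  have : INR n * etan a eps <= INR n * (Rr * ln (INR q)).
  { rewrite lnq. apply Rmult_le_compat_l; [lra|]. rewrite lnq in lnqpos. nra. }
  rewrite lnM. nra. }
have hnat1 : (n * expn (q - 1) 2 < 2 * expn q 2)%nat.
{ have l1 : ln (INR q - 1) <= ln (INR L) by apply ln_le'; lra.
  have l2 : ln (INR q) <= (INR q - 1) * ln 2.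
  { have := ltn_expl (q - 1) (isT : (1 < 2)%nat).
    rewrite subn1 prednK // => /INR_lenat. rewrite INR_expn => h.
    have := ln_le' (INR q) _ ltac:(lra) h. rewrite ln_pow; last by simpl; lra.
    rewrite -subn1 INR_subn; last lia. simpl INR. replace (1+1) with 2 by ring. lra. }
  have l3 : Rr * INR n * ln (INR q) < ln (INR q) / a.
  { apply (Rmult_lt_reg_r a); [lra|].
    have -> : ln (INR q) / a * a = ln (INR q) by field; lra.
    nra. }
  have l4 : ln (INR q) / a <= ln (INR q) + ln 2.
  { have -> : ln (INR q) / a = ln (INR q) + ln (INR q) / (INR q - 1)
      by rewrite /a; field; lra.
    have : ln (INR q) / (INR q - 1) <= ln 2.
    { apply (Rmult_le_reg_r (INR q - 1)); [lra|].
      have -> : ln (INR q) / (INR q - 1) * (INR q - 1) = ln (INR q) by field; lra.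
      lra. }
    lra. }
  have l5 : ln ((INR q - 1) ^ 2 * (2 * INR n)) < ln ((2 * INR q) ^ 2).
  { rewrite ln_mult; [|apply pow_lt; lra|lra]. rewrite !ln_pow; try lra.
    rewrite (ln_mult 2 (INR q)); try lra. simpl INR. lra. }
  have l6 := ln_lt_inv ((INR q - 1) ^ 2 * (2 * INR n)) ((2 * INR q) ^ 2)
     ltac:(apply Rmult_lt_0_compat; [apply pow_lt|]; lra)
     ltac:(apply pow_lt; lra) l5.
  apply INR_ltnat. rewrite !INR_muln INR_subn; last lia.
  simpl INR. simpl in l6. nra. }
have hnat2 : (2 * n * expn (Vs n q k1.+1) 2 < expn q (2 * n))%nat.
{ have hc := hcombR k1.+1 hk1tau.
  have hV : 0 < INR (Vs n q k1.+1) by apply INR_pos, Vs_gt0.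
  have l5 : ln (2 * INR n * INR (Vs n q k1.+1) ^ 2) < ln (INR q ^ (2 * n)).
  { rewrite ln_mult; [|lra|apply pow_lt; lra]. rewrite !ln_pow; try lra.
    rewrite INR_muln. simpl INR. lra. }
  have l6 := ln_lt_inv (2 * INR n * INR (Vs n q k1.+1) ^ 2) (INR q ^ (2 * n))
     ltac:(apply Rmult_lt_0_compat; [|apply pow_lt]; lra)
     ltac:(apply pow_lt; lra) l5.
  apply INR_ltnat. rewrite !INR_muln !INR_expn. simpl INR. simpl INR in l6. lra. }
have := bad_case q n k1.+1 hq hn hk1n hceil hnat1.
move=> h3. have := leq_ltn_trans h3 hnat2. by rewrite ltnn.
Qed.
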